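(* Let $a>1$ be an integer that is a zero divisor in $\mathbb{Z}/m\mathbb{Z}$, let $k\ge1$ with $a^k\mid m$, and let $(K_n,\alpha)$ be an edge-labeled complete graph over $\mathbb{Z}/m\mathbb{Z}$ with ordered edge labels $a^{i_1},\dots,a^{i_{r_n}}$ such that either $a^{i_{r_n}}\mid a^{i_{r_n-1}}\mid\cdots\mid a^{i_1}\mid a^k$ with $i_{r_n}\ge1$ and $i_1<k$, or $a^{i_1}\mid a^{i_2}\mid\cdots\mid a^{i_{r_n}}\mid a^k$ with $i_1\ge1$ and $i_{r_n}<k$. Then for every connected spanning subgraph $H$ of $K_n$, equipped with the restriction of $\alpha$ to its edges, $\operatorname{rk}[\mathbb{Z}/m\mathbb{Z}]_{(H,\alpha)}=n$.
   Context: A spline on an edge-labeled graph $(G,\alpha)$ over $\mathbb{Z}/m\mathbb{Z}$ (edges labeled by nonzero ideals) is a vector $(f_{v_1},\dots,f_{v_n})\in(\mathbb{Z}/m\mathbb{Z})^n$ with $f_{v_i}-f_{v_j}\in\alpha(v_iv_j)$ for every edge; the splines form a $\mathbb{Z}$-module $[\mathbb{Z}/m\mathbb{Z}]_{(G,\alpha)}$, whose rank $\operatorname{rk}$ is the smallest size of a generating set. $K_n$ is the complete graph on $v_1,\dots,v_n$; $r_k=k(k-1)/2$; for $1\le j<k\le n$ the edge $v_jv_k$ is $e_{r_{k-1}+j}$. ''Ordered edge labels $l_1,\dots,l_{r_n}$'' means $\alpha(e_s)$ is the ideal generated by $l_s+m\mathbb{Z}$. *)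

(* Defs.v *)
From mathcomp Require Import all_boot all_order all_algebra.
Set Implicit Arguments. Unset Strict Implicit. Unset Printing Implicit Defensive.
Import GRing.Theory Num.Theory.
From mathcomp Require Import intdiv.

(* Elements of Z/mZ are represented by integer representatives; two
   representatives are equal in Z/mZ iff m divides their difference. *)

Definition zero_divisor_mod (m a : nat) : Prop :=
  a %% m != 0 /\ exists b : nat, b %% m != 0 /\ (a * b) %% m = 0.

Definition r (k : nat) : nat := (k * (k - 1)) %/ 2.

(* With 0-based vertices u < v (i.e. v_{u+1} v_{v+1} in the paper), the edge
   v_{u+1} v_{v+1} is e_{r_v + u + 1}. *)
Definition edge_index (u v : nat) : nat := r v + u + 1.

(* A spanning subgraph H of K_n is given by its edge set: E u v for u < v
   means the edge v_{u+1}v_{v+1} is in H (values of E u v with u >= v are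
   irrelevant). *)
Definition hadj n (E : 'I_n -> 'I_n -> bool) : rel 'I_n :=
  fun u v => ((u < v) && E u v) || ((v < u) && E v u).

Definition connected_subgraph n (E : 'I_n -> 'I_n -> bool) : Prop :=
  forall u v : 'I_n, connect (hadj E) u v.

(* f is a spline on (H, alpha) over Z/mZ, where the edge e_s carries the
   ideal of Z/mZ generated by a^(i s) + mZ. *)
Definition is_spline (m a : nat) (i : nat -> nat) n
    (E : 'I_n -> 'I_n -> bool) (f : 'I_n -> int) : Prop :=
  forall u v : 'I_n, (u < v)%N -> E u v ->
    exists c : int, (m%:Z %| (f u - f v - c * (a ^ i (edge_index u v))%:Z)%R)%Z.

Definition generates (m a : nat) (i : nat -> nat) n
    (E : 'I_n -> 'I_n -> bool) k (g : 'I_k -> 'I_n -> int) : Prop :=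
  (forall j, is_spline m a i E (g j)) /\
  forall f, is_spline m a i E f ->
    exists c : 'I_k -> int,
      forall v : 'I_n, (m%:Z %| (f v - \sum_(j < k) c j * g j v)%R)%Z.

Definition spline_rank_is (m a : nat) (i : nat -> nat) n
    (E : 'I_n -> 'I_n -> bool) (q : nat) : Prop :=
  (exists g : 'I_q -> 'I_n -> int, generates m a i E g) /\
  (forall k (g : 'I_k -> 'I_n -> int), generates m a i E g -> (q <= k)%N).

(* Main.v *)
Require Import Defs.
From mathcomp Require Import all_boot all_order all_algebra.
From mathcomp Require Import intdiv zmodp ring zify.
From Stdlib Require Import Classical FunctionalExtensionality.
Set Implicit Arguments. Unset Strict Implicit. Unset Printing Implicit Defensive.
Import Order.TTheory GRing.Theory Num.Theory.
Local Open Scope ring_scope.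

Lemma min_exists (Q : nat -> Prop) N : Q N -> exists d, Q d /\ forall e, Q e -> (d <= e)%N.
Proof.
elim: N {-2}N (leqnn N) => [|N IH] n hn hQ.
  exists n; split => // e _; move: hn; rewrite leqn0 => /eqP ->; done.
case: (classic (exists e, (e < n)%N /\ Q e)) => [[e [he hQe]]|hno].
  apply: (IH e) => //; rewrite -ltnS; exact: leq_trans he hn.
exists n; split => // e hQe; rewrite leqNgt; apply/negP => he; apply: hno; by exists e.
Qed.

Section Clos.
Variable P : (nat -> int) -> Prop.
Hypothesis P0 : P (fun _ => 0).
Hypothesis PB : forall x y, P x -> P y -> P (fun t => x t - y t).

Lemma PN x : P x -> P (fun t => - x t).
Proof.
move=> hx; have := PB P0 hx.
by have -> : (fun t => 0 - x t) = (fun t => - x t) by apply: functional_extensionality => t; rewrite sub0r.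
Qed.

Lemma PD x y : P x -> P y -> P (fun t => x t + y t).
Proof.
move=> hx hy; have := PB hx (PN hy).
by have -> : (fun t => x t - - y t) = (fun t => x t + y t) by apply: functional_extensionality => t; rewrite opprK.
Qed.

Lemma PZ (z : int) x : P x -> P (fun t => z * x t).
Proof.
move=> hx.
have hn : forall n : nat, P (fun t => n%:Z * x t).
  elim=> [|n IH].
    by have -> : (fun t => 0%:Z * x t) = (fun _ => 0) by apply: functional_extensionality => t; rewrite mul0r.
  have := PD IH hx.
  by have -> : (fun t => n%:Z * x t + x t) = (fun t => n.+1%:Z * x t) by apply: functional_extensionality => t; rewrite -[n.+1]addn1 PoszD mulrDl mul1r.
case: z => n; first exact: hn.
have := PN (hn n.+1).
by have -> : (fun t => - (n.+1%:Z * x t)) = (fun t => Negz n * x t) by apply: functional_extensionality => t; rewrite NegzE mulNr.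
Qed.
End Clos.

Lemma lattice_basis n : forall (P : (nat -> int) -> Prop) (m : nat), (0 < m)%N ->
  P (fun _ => 0) -> (forall x y, P x -> P y -> P (fun t => x t - y t)) ->
  (forall x j, P x -> (n <= j)%N -> x j = 0) ->
  (forall j, (j < n)%N -> P (fun t => if t == j then m%:Z else 0)) ->
  exists b : nat -> nat -> int, (forall j, (j < n)%N -> P (b j)) /\
    forall x, P x -> exists c : nat -> int, forall t, x t = \sum_(j < n) c j * b j t.
Proof.
elim: n => [|n IH] P m m0 P0 PB Psupp Pe.
  exists (fun _ _ => 0); split => // x hx; exists (fun _ => 0) => t.
  by rewrite big_ord0; apply: (Psupp x t hx).
pose Q d := (0 < d)%N /\ exists x, P x /\ x n = d%:Z.
have [d [[d0 [x0 [Px0 x0n]]] dmin]] : exists d, Q d /\ forall e, Q e -> (d <= e)%N.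
  apply: (@min_exists Q m); split => //; exists (fun t => if t == n then m%:Z else 0); split.
    exact: Pe.
  by rewrite eqxx.
pose P' x := P x /\ x n = 0.
have [b' [Pb' hb']] : exists b : nat -> nat -> int, (forall j, (j < n)%N -> P' (b j)) /\
    forall x, P' x -> exists c : nat -> int, forall t, x t = \sum_(j < n) c j * b j t.
  apply: (IH P' m) => //.
  - move=> x y [hx hxn] [hy hyn]; rewrite /P'; split; first exact: PB.
    by rewrite hxn hyn subr0.
  - move=> x j [hx hxn] hj; case: (ltngtP n j) => [hj'|//|<-//].
    + by apply: (Psupp x j hx).
    + by move: hj; rewrite leqNgt => /negP.
  - move=> j hj; rewrite /P'; split; first by apply: Pe; apply: ltnW.
    by rewrite eq_sym (ltn_eqF hj).
exists (fun j => if j == n then x0 else b' j); split.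
  move=> j hj; case: eqP => // /eqP hjn; have : (j < n)%N by rewrite ltn_neqAle hjn -ltnS.
  by move=> /Pb' [].
move=> x hx.
pose q := (x n %/ d%:Z)%Z.
pose y := fun t => x t - q * x0 t.
have Py : P y by rewrite /y; apply: (PB) => //; exact: (PZ P0 PB q Px0).
have yn : y n = ((x n) %% d%:Z)%Z by rewrite /y x0n {1}(divz_eq (x n) d%:Z) addrC addKr.
have yn0 : y n = 0.
  have dne : d%:Z != 0 by rewrite eqz_nat -lt0n.
  have hge := modz_ge0 (x n) dne.
  have hlt : ((x n %% d%:Z)%Z < d%:Z) by rewrite ltz_pmod // ltz_nat.
  case: (boolP ((x n %% d%:Z)%Z == 0)) => [/eqP h|hne]; first by rewrite yn h.
  exfalso.
  have hpos : 0 < (x n %% d%:Z)%Z by rewrite lt_def hne hge.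
  have := dmin `|(x n %% d%:Z)%Z|%N; rewrite leqNgt => /(_ _)/negP; apply.
    split; first by rewrite absz_gt0.
    by exists y; split => //; rewrite yn gtz0_abs.
  by rewrite -ltz_nat gtz0_abs.
have [c' hc'] := hb' y (conj Py yn0).
exists (fun j => if j == n then q else c' j) => t.
rewrite big_ord_recr /= eqxx.
have -> : x t = y t + q * x0 t by rewrite /y subrK.
rewrite hc'; congr (_ + _); apply: eq_bigr => j _.
by rewrite (ltn_eqF (ltn_ord j)).
Qed.

Lemma rS v : r v.+1 = (r v + v)%N.
Proof.
rewrite /r; case: v => [|v] //=. rewrite !subn1 /=.
have -> : (v.+2 * v.+1 = v.+1 * 2 + v.+1 * v)%N by ring.
by rewrite divnMDl // addnC.
Qed.

Lemma r_mono u v : (u <= v)%N -> (r u <= r v)%N.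
Proof.
move=> /subnK <-; elim: (v - u)%N => [|d IH] //=.
by rewrite addSn rS; apply: leq_trans IH (leq_addr _ _).
Qed.

Lemma edge_index_bound n (u v : nat) : (u < v)%N -> (v < n)%N ->
  (1 <= edge_index u v)%N /\ (edge_index u v <= r n)%N.
Proof.
move=> huv hvn; rewrite /edge_index; split; first by rewrite addn1.
apply: leq_trans (r_mono hvn); rewrite rS -addnA addn1 leq_add2l; exact: huv.
Qed.

Lemma spline_ext m a i n E (f g : 'I_n -> int) :
  is_spline m a i E f -> (forall v, f v = g v) -> is_spline m a i E g.
Proof.
move=> hf hfg u v huv e; have [c hc] := hf u v huv e; exists c; by rewrite -!hfg.
Qed.

Lemma upper m a i n E : (0 < m)%N -> exists g : 'I_n -> 'I_n -> int, generates m a i E g.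
Proof.
move=> m0.
pose P (x : nat -> int) := (forall j, (n <= j)%N -> x j = 0) /\
   is_spline m a i E (fun v : 'I_n => x (val v)).
have LB := @lattice_basis n P m m0.
have [b [Pb hb]] : exists b : nat -> nat -> int, (forall j, (j < n)%N -> P (b j)) /\
    forall x, P x -> exists c : nat -> int, forall t, x t = \sum_(j < n) c j * b j t.
  apply: LB.
- split => // u v _ _; exists 0; by rewrite mul0r !subr0 dvdz0.
- move=> x y [sx hx] [sy hy]; split.
    by move=> j hj; rewrite sx // sy // subr0.
  move=> u v huv e; have [c1 h1] := hx u v huv e; have [c2 h2] := hy u v huv e.
  exists (c1 - c2); have := rpredB h1 h2.
  set A := ((a ^ _)%:Z).
  have -> : x u - y u - (x v - y v) - (c1 - c2) * A = x u - x v - c1 * A - (y u - y v - c2 * A) by rewrite /A; ring.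
  done.
- by move=> x j [sx _]; apply: sx.
- move=> j hj; split.
    move=> t ht; have : t != j by rewrite neq_ltn (leq_trans hj ht) orbT.
    by move=> /negbTE ->.
  move=> u v _ _; exists 0; rewrite mul0r subr0.
  apply: rpredB; case: ifP => _; by rewrite ?dvdzz ?dvdz0.
exists (fun j v => b (val j) (val v)); split.
  by move=> j; have [_ ] := Pb _ (ltn_ord j).
move=> f hf.
pose x (t : nat) : int := oapp f 0 (insub t).
have xv : forall v : 'I_n, x (val v) = f v by move=> v; rewrite /x valK.
have Px : P x.
  split; last by apply: spline_ext hf _ => v; rewrite xv.
  by move=> j hj; rewrite /x insubN // -leqNgt.
have [c hc] := hb x Px.
exists (fun j => c (val j)) => v.
by rewrite -xv hc subrr dvdz0.
Qed.

Lemma lower m a i n E k (g : 'I_k -> 'I_n -> int) : (1 < a)%N -> (0 < m)%N -> (a %| m)%N ->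
  (forall u v : 'I_n, (u < v)%N -> (a ^ i (edge_index u v) * a %| m)%N) ->
  generates m a i E g -> (n <= k)%N.
Proof.
move=> a1 m0 am hA [gsp gen].
set M := (m %/ a)%N.
have mM : m = (M * a)%N by rewrite divnK.
have M0 : (0 < M)%N by rewrite divn_gt0 ?(ltnW a1) // dvdn_leq.
pose f (v w : 'I_n) : int := if w == v then M%:Z else 0.
have fsp : forall v, is_spline m a i E (f v).
  move=> v u w huw _.
  have hd : (a ^ i (edge_index u w) %| M)%N by rewrite /M dvdn_divRL // hA.
  have hdz : ((a ^ i (edge_index u w))%:Z %| f v u - f v w)%Z.
    by apply: rpredB; rewrite /f; case: ifP => _; rewrite ?dvdz0 // dvdzE /= hd.
  exists ((f v u - f v w) %/ (a ^ i (edge_index u w))%:Z)%Z.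
  by rewrite divzK // subrr dvdz0.
have hc : forall v : 'I_n, exists c : 'I_k -> int,
    forall w, (m%:Z %| f v w - \sum_(j < k) c j * g j w)%Z.
  by move=> v; exact: gen _ (fsp v).
have [c hcv] := fin_all_exists hc.
pose C := \matrix_(v < n, j < k) c v j.
pose G := \matrix_(j < k, w < n) g j w.
pose H := \matrix_(v < n, w < n) ((f v w - \sum_(j < k) c v j * g j w) %/ m%:Z)%Z.
have CG : C *m G = M%:Z *: (1%:M - a%:Z *: H).
  apply/matrixP => v w; rewrite !mxE.
  have -> : \sum_(j < k) C v j * G j w = \sum_(j < k) c v j * g j w
    by apply: eq_bigr => j _; rewrite !mxE.
  have e := divzK (hcv v w).
  move: e; set S := \sum_(j < k) _ ; set h := (_ %/ _)%Z => e.
  have -> : S = f v w - h * m%:Z by rewrite e opprB addrC subrK.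
  rewrite mM PoszM /f eq_sym; case: (v == w); rewrite ?mulr1n ?mulr0n; ring.
have detCG : \det (C *m G) = (M%:Z) ^+ n * \det (1%:M - a%:Z *: H) by rewrite CG detZ.
have ndet : \det (1%:M - a%:Z *: H) != 0.
  have : intr (\det (1%:M - a%:Z *: H)) = 1 :> 'Z_a.
    rewrite -det_map_mx.
    have -> : map_mx intr (1%:M - a%:Z *: H) = 1%:M :> 'M['Z_a]_n.
      apply/matrixP => x y; rewrite !mxE rmorphB /= rmorphMn rmorph1 rmorphM /=.
      have ia : (a%:Z)%:~R = a%:R :> 'Z_a by [].
      by rewrite ia pchar_Zp // mul0r subr0.
    by rewrite det1.
  move=> h; apply/eqP => h0; move: h; rewrite h0 rmorph0 => /esym/eqP; by rewrite oner_eq0.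
have nCG : \det (C *m G) != 0.
  rewrite detCG; apply: mulf_neq0 => //.
  rewrite expf_eq0 negb_and; apply/orP; right; apply/negP => /eqP /(congr1 absz) /= h.
  by rewrite h in M0.
have : map_mx (intr : int -> rat) (C *m G) \in unitmx.
  rewrite unitmxE det_map_mx unitfE; move: nCG; apply: contra => /eqP h; apply/eqP; move: h; set z := \det _; by move/eqP; rewrite (_ : _ z = z%:~R) // intr_eq0 => /eqP.
rewrite map_mxM => /mxrank_unit hr.
rewrite -hr; exact: leq_trans (mxrankM_maxl _ _) (rank_leq_col _).
Qed.

Lemma exps_lt_k (a k n : nat) (i : nat -> nat) : (1 < a)%N ->
  ( ((forall s, (1 <= s)%N -> (s < r n)%N -> (a ^ i s.+1 %| a ^ i s)%N) /\
     (a ^ i 1 %| a ^ k)%N /\ (1 <= i (r n))%N /\ (i 1 < k)%N)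
  \/
    ((forall s, (1 <= s)%N -> (s < r n)%N -> (a ^ i s %| a ^ i s.+1)%N) /\
     (a ^ i (r n) %| a ^ k)%N /\ (1 <= i 1)%N /\ (i (r n) < k)%N) ) ->
  forall s, (1 <= s)%N -> (s <= r n)%N -> (i s < k)%N.
Proof.
move=> a1 [[h1 [_ [_ hk]]]|[h2 [_ [_ hk]]]].
  suff H : forall s, (1 <= s)%N -> (s <= r n)%N -> (i s <= i 1)%N.
    by move=> s s1 sn; apply: leq_ltn_trans (H s s1 sn) hk.
  elim=> [//|s IH] _ sn.
  case: s IH sn => [//|s] IH sn.
  have h := h1 s.+1 isT sn; rewrite dvdn_Pexp2l // in h.
  exact: leq_trans h (IH isT (ltnW sn)).
suff H : forall d s, (1 <= s)%N -> (s + d)%N = r n -> (i s <= i (r n))%N.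
  move=> s s1 sn; apply: leq_ltn_trans (H (r n - s)%N s s1 _) hk; by rewrite subnKC.
elim=> [|d IH] s s1 e; first by rewrite -e addn0.
have sn : (s < r n)%N by rewrite -e addnS ltnS leq_addr.
have h := h2 s s1 sn; rewrite dvdn_Pexp2l // in h.
apply: leq_trans h (IH s.+1 isT _); by rewrite addSn -addnS.
Qed.

Local Close Scope ring_scope.

Theorem mainTheorem6 (m a k n : nat) (i : nat -> nat) :
  (1 < a)%N ->
  zero_divisor_mod m a ->
  (1 <= k)%N ->
  (a ^ k %| m)%N ->
  ( ((forall s, (1 <= s)%N -> (s < r n)%N -> (a ^ i s.+1 %| a ^ i s)%N) /\
     (a ^ i 1 %| a ^ k)%N /\ (1 <= i (r n))%N /\ (i 1 < k)%N)
  \/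
    ((forall s, (1 <= s)%N -> (s < r n)%N -> (a ^ i s %| a ^ i s.+1)%N) /\
     (a ^ i (r n) %| a ^ k)%N /\ (1 <= i 1)%N /\ (i (r n) < k)%N) ) ->
  forall E : 'I_n -> 'I_n -> bool,
    connected_subgraph E ->
    spline_rank_is m a i E n.
Proof.
move=> a1 zd k1 akm hyp E _.
have m0 : (0 < m)%N.
  case: zd => _ [b [hb hab]]; rewrite lt0n; apply/eqP => m00.
  rewrite m00 !modn0 in hb hab; move/eqP: hab; rewrite muln_eq0 (negbTE hb) orbF.
  by move=> /eqP a0; rewrite a0 in a1.
have am : (a %| m)%N by apply: dvdn_trans akm; rewrite dvdn_exp.
split; first exact: upper.
move=> k' g hg; apply: (lower a1 m0 am _ hg) => u v huv.
have [e1 e2] := edge_index_bound huv (ltn_ord v).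
rewrite -expnSr; apply: dvdn_trans akm; rewrite dvdn_exp2l //.
exact: (exps_lt_k a1 hyp e1 e2).
Qed.
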